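(* If $t$ is a canonical term of $\Phi$ and $t\rightarrow u$ in $\Phi$, then $\langle\!\langle t\rangle\!\rangle\rightarrow_v\langle\!\langle u\rangle\!\rangle$.
   Context: $\lambda$-terms: $M::=x\mid\lambda x.M\mid MN$, variables from a set $\Upsilon$ with a fixed total order, $FV(M)$ the ordered sequence of free variables. Values $V::=x\mid\lambda x.M$; weak call-by-value reduction $\rightarrow_v$: $(\lambda x.M)V\rightarrow_v M\{V/x\}$ for values $V$, closed under $ML$ and $LM$ contexts (no reduction under $\lambda$). $\Phi$: binary function symbol $\mathbf{app}$, constructors $c_{x,M}$ ($M$ a $\lambda$-term, $x\in\Upsilon$) of arity the length of $FV(\lambda x.M)$; $[\![x]\!]=x$, $[\![\lambda x.M]\!]=c_{x,M}(x_1,\dots,x_n)$ with $FV(\lambda x.M)=x_1,\dots,x_n$, $[\![MN]\!]=\mathbf{app}([\![M]\!],[\![N]\!])$; rules $\mathbf{app}(c_{x,M}(x_1,\dots,x_n),x)\rightarrow[\![M]\!]$; rewriting is call-by-value (a step replaces anywhere a subterm $l\sigma$ by $r\sigma$, $\sigma$ mapping variables to constructor terms, i.e. closed terms built only from constructors). $\langle\!\langle x\rangle\!\rangle=x$, $\langle\!\langle\mathbf{app}(u,v)\rangle\!\rangle=\langle\!\langle u\rangle\!\rangle\langle\!\langle v\rangle\!\rangle$, $\langle\!\langle c_{x,M}(t_1,\dots,t_n)\rangle\!\rangle=(\lambda x.M)\{\langle\!\langle t_1\rangle\!\rangle/x_1,\dots,\langle\!\langle t_n\rangle\!\rangle/x_n\}$.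 A closed term $t$ is canonical if it is a constructor term or $t=\mathbf{app}(u,v)$ with $u,v$ canonical. *)

(* Defs.v *)
From Stdlib Require List.
From mathcomp Require Import all_boot.
Set Implicit Arguments. Unset Strict Implicit. Unset Printing Implicit Defensive.

Inductive lam : Type :=
| Var : nat -> lam
| Lam : nat -> lam -> lam
| App : lam -> lam -> lam.

Fixpoint lsize (M : lam) : nat :=
  match M with
  | Var _ => 1
  | Lam _ N => (lsize N).+1
  | App M1 M2 => (lsize M1 + lsize M2).+1
  end.

Fixpoint fvl (M : lam) : seq nat :=
  match M with
  | Var x => [:: x]
  | Lam x N => [seq y <- fvl N | y != x]
  | App M1 M2 => fvl M1 ++ fvl M2
  end.

Definition FV (M : lam) : seq nat := sort leq (undup (fvl M)).

Fixpoint allvars (M : lam) : seq nat :=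
  match M with
  | Var x => [:: x]
  | Lam x N => x :: allvars N
  | App M1 M2 => allvars M1 ++ allvars M2
  end.

(** renaming of free y into z (correct when z does not occur in M) *)
Fixpoint rn (y z : nat) (M : lam) : lam :=
  match M with
  | Var w => if w == y then Var z else Var w
  | Lam w N => if w == y then Lam w N else Lam w (rn y z N)
  | App M1 M2 => App (rn y z M1) (rn y z M2)
  end.

Fixpoint lookup (y : nat) (s : seq (nat * lam)) : option lam :=
  match s with
  | [::] => None
  | p :: s' => if p.1 == y then Some p.2 else lookup y s'
  end.

(** Simultaneous capture-avoiding substitution (Curry style: bound variable
    renamed to a fresh one when capture would occur); fuel = size of term. *)
Fixpoint ssub_aux (n : nat) (s : seq (nat * lam)) (M : lam) : lam :=
  match n with
  | 0 => M
  | n'.+1 =>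
    match M with
    | Var y => match lookup y s with Some N => N | None => Var y end
    | App M1 M2 => App (ssub_aux n' s M1) (ssub_aux n' s M2)
    | Lam y N =>
      let s' := [seq p <- s | (p.1 != y) && (p.1 \in fvl N)] in
      if has (fun p => y \in fvl p.2) s' then
        let z := (\max_(v <- y :: allvars N ++ flatten [seq allvars p.2 | p <- s']) v).+1 in
        Lam z (ssub_aux n' s' (rn y z N))
      else Lam y (ssub_aux n' s' N)
    end
  end.

Definition ssub (s : seq (nat * lam)) (M : lam) : lam := ssub_aux (lsize M) s M.

Definition subst1 (M : lam) (x : nat) (V : lam) : lam := ssub [:: (x, V)] M.

Definition is_value (M : lam) : Prop :=
  match M with Var _ | Lam _ _ => True | App _ _ => False end.

Inductive vstep : lam -> lam -> Prop :=
| vbeta x M V : is_value V -> vstep (App (Lam x M) V) (subst1 M x V)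
| vappl M M' L : vstep M M' -> vstep (App M L) (App M' L)
| vappr M M' L : vstep M M' -> vstep (App L M) (App L M').

(** * The first-order TRS Phi. Constructors c_{x,M} are labelled by (x, M),
    arguments are stored as a list (arity = size (FV (Lam x M))). *)
Inductive term : Type :=
| Tvar : nat -> term
| Tapp : term -> term -> term
| Tcon : nat -> lam -> list term -> term.

Fixpoint enc (M : lam) : term :=
  match M with
  | Var x => Tvar x
  | Lam x N => Tcon x N (map Tvar (FV (Lam x N)))
  | App M1 M2 => Tapp (enc M1) (enc M2)
  end.

Fixpoint tsubst (sigma : nat -> term) (t : term) : term :=
  match t with
  | Tvar x => sigma x
  | Tapp u v => Tapp (tsubst sigma u) (tsubst sigma v)
  | Tcon x M ts => Tcon x M (map (tsubst sigma) ts)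
  end.

Inductive cterm : term -> Prop :=
| cterm_con x M ts :
    size ts = size (FV (Lam x M)) ->
    (forall t, List.In t ts -> cterm t) ->
    cterm (Tcon x M ts).

Inductive canonical : term -> Prop :=
| canon_c t : cterm t -> canonical t
| canon_app u v : canonical u -> canonical v -> canonical (Tapp u v).

(** call-by-value rewriting in Phi: rule app(c_{x,M}(x1..xn), x) -> [[M]],
    instantiated by sigma mapping variables to constructor terms, at any position *)
Inductive tstep : term -> term -> Prop :=
| tstep_root x M (sigma : nat -> term) :
    (forall y, cterm (sigma y)) ->
    tstep (tsubst sigma (Tapp (Tcon x M (map Tvar (FV (Lam x M)))) (Tvar x)))
          (tsubst sigma (enc M))
| tstep_appl u u' v : tstep u u' -> tstep (Tapp u v) (Tapp u' v)
| tstep_appr u v v' : tstep v v' -> tstep (Tapp u v) (Tapp u v')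
| tstep_con x M ts1 t t' ts2 :
    tstep t t' -> tstep (Tcon x M (ts1 ++ t :: ts2)) (Tcon x M (ts1 ++ t' :: ts2)).

Fixpoint dec (t : term) : lam :=
  match t with
  | Tvar x => Var x
  | Tapp u v => App (dec u) (dec v)
  | Tcon x M ts => ssub (zip (FV (Lam x M)) (map dec ts)) (Lam x M)
  end.

(* Main.v *)
Require Import Defs.
From mathcomp Require Import all_boot.

Definition upd (f : nat -> lam) (y : nat) := fun z => if z == y then Var y else f z.

Fixpoint psub (f : nat -> lam) (M : lam) : lam :=
  match M with
  | Var y => f y
  | App M1 M2 => App (psub f M1) (psub f M2)
  | Lam y N => Lam y (psub (upd f y) N)
  end.

Definition sfun (s : seq (nat * lam)) (y : nat) : lam :=
  match lookup y s with Some N => N | None => Var y end.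

Definition closeds (s : seq (nat * lam)) := forall p, List.In p s -> fvl p.2 = [::].

Lemma psub_ext M f g : (forall z, z \in fvl M -> f z = g z) -> psub f M = psub g M.
Proof.
elim: M f g => [y|y N IH|M1 IH1 M2 IH2] f g /= H.
- by apply: H; rewrite inE.
- congr Lam; apply: IH => z Hz; rewrite /upd; case: eqP => // /eqP Hzy.
  by apply: H; rewrite mem_filter Hzy.
- by rewrite (IH1 f g) ?(IH2 f g) // => z Hz; apply: H; rewrite mem_cat Hz ?orbT.
Qed.

Lemma psub_id M f : (forall z, z \in fvl M -> f z = Var z) -> psub f M = M.
Proof.
elim: M f => [y|y N IH|M1 IH1 M2 IH2] f /= H.
- by apply: H; rewrite inE.
- congr Lam; apply: IH => z Hz; rewrite /upd; case: eqP => [->//|/eqP Hzy].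
  by apply: H; rewrite mem_filter Hzy.
- by rewrite IH1 ?IH2 // => z Hz; apply: H; rewrite mem_cat Hz ?orbT.
Qed.

Lemma psub_closed M f : fvl M = [::] -> psub f M = M.
Proof. by move=> H; apply: psub_id => z; rewrite H. Qed.

Lemma fvl_psub M f y : y \in fvl (psub f M) -> exists2 z, z \in fvl M & y \in fvl (f z).
Proof.
elim: M f => [w|w N IH|M1 IH1 M2 IH2] f /=.
- by move=> H; exists w; rewrite ?inE.
- rewrite mem_filter => /andP [Hyw /IH [z Hz]]; rewrite /upd; case: eqP => [_|/eqP Hzw].
  + by rewrite inE => /eqP E; rewrite E eqxx in Hyw.
  + by move=> Hy; exists z; rewrite // mem_filter Hzw.
- rewrite mem_cat => /orP [/IH1 [z Hz Hy]|/IH2 [z Hz Hy]]; exists z => //;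
  by rewrite mem_cat Hz ?orbT.
Qed.

Lemma psub_comp M g h : (forall z, g z = Var z \/ fvl (g z) = [::]) ->
  psub h (psub g M) = psub (fun z => psub h (g z)) M.
Proof.
elim: M g h => [y|y N IH|M1 IH1 M2 IH2] g h /= Hg.
- by [].
- congr Lam; rewrite IH; last first.
    by move=> z; rewrite /upd; case: (z =P y) => [->|_]; [left|apply: Hg].
  apply: psub_ext => z _; rewrite /upd; case Hzy: (z == y).
    by rewrite /= eqxx.
  case: (Hg z) => [->|Hc] /=; first by rewrite Hzy.
  by rewrite !psub_closed.
- by rewrite IH1 // IH2.
Qed.

Lemma In_filter (a : pred (nat * lam)) p s : List.In p (filter a s) -> List.In p s.
Proof.
elim: s => //= q s IH; case: (a q) => /=; [case=> [->|/IH]|move/IH]; auto.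
Qed.

Lemma has_closed s y : closeds s -> has (fun p => y \in fvl p.2) s = false.
Proof.
elim: s => //= p s IH H; rewrite (H p) ?IH //=; [|by left].
by move=> q Hq; apply: H; right.
Qed.

Lemma lookup_filter_keep (P : pred (nat * lam)) z s :
  (forall p, p.1 = z -> P p) -> lookup z (filter P s) = lookup z s.
Proof.
move=> H; elim: s => //= p s IH; case HP: (P p) => /=; rewrite IH //.
case: eqP => // E; by rewrite H in HP.
Qed.

Lemma lookup_filter_none (P : pred (nat * lam)) z s :
  (forall p, p.1 = z -> ~~ P p) -> lookup z (filter P s) = None.
Proof.
move=> H; elim: s => //= p s IH; case HP: (P p) => //=.
case: eqP => // E; by move: (H p E); rewrite HP.
Qed.

Lemma lookup_In z s v : lookup z s = Some v -> List.In (z, v) s.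
Proof.
elim: s => //= [[a b]] s IH /=; case: eqP => [-> [->]|_ /IH]; auto.
Qed.

Lemma sfun_cl s z : closeds s -> sfun s z = Var z \/ fvl (sfun s z) = [::].
Proof.
move=> H; rewrite /sfun; case E: (lookup z s) => [v|]; last by left.
by right; apply: (H (z, v)); apply: lookup_In.
Qed.

Lemma ssub_auxE n s M : lsize M <= n -> closeds s -> ssub_aux n s M = psub (sfun s) M.
Proof.
elim: n s M => [|n IH] s [y|y N|M1 M2] //= Hn Hs.
- rewrite has_closed; last by move=> p /In_filter; apply: Hs.
  congr Lam; rewrite IH //; last by move=> p /In_filter; apply: Hs.
  apply: psub_ext => z Hz; rewrite /upd /sfun; case: eqP => [->|/eqP Hzy].
    by rewrite lookup_filter_none // => p ->; rewrite eqxx.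
  by rewrite lookup_filter_keep // => p ->; rewrite Hzy Hz.
- rewrite ltnS in Hn; rewrite !IH //.
  + by apply: leq_trans Hn; rewrite leq_addl.
  + by apply: leq_trans Hn; rewrite leq_addr.
Qed.

Lemma ssubE s M : closeds s -> ssub s M = psub (sfun s) M.
Proof. by move=> H; apply: ssub_auxE. Qed.

Lemma In_zip2 (a : seq nat) (b : seq lam) p : List.In p (zip a b) -> List.In p.2 b.
Proof.
elim: a b => [|x a IH] [|y b] //= [<-|/IH]; auto.
Qed.

Lemma In_map_dec v ts : List.In v (map dec ts) -> exists2 t, List.In t ts & v = dec t.
Proof.
elim: ts => //= t ts IH [<-|/IH [t' H1 H2]]; [exists t; auto| exists t'; auto].
Qed.

Lemma In_map_ex (A : Type) (f : A -> lam) v l : List.In v (map f l) -> exists z, v = f z.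
Proof. elim: l => //= a l IH [<-|/IH //]; by exists a. Qed.

Lemma lookup_zip_in (a : seq nat) (b : seq lam) z : size a = size b -> z \in a ->
  exists2 v, lookup z (zip a b) = Some v & List.In v b.
Proof.
elim: a b => [|x a IH] [|y b] //= [Hs]; rewrite inE; case Hzx: (z == x) => /=.
- by move: Hzx => /eqP ->; rewrite eqxx; exists y; auto.
- move=> Hz; have [v H1 H2] := IH b Hs Hz; exists v; auto.
  by rewrite eq_sym Hzx.
Qed.

Lemma lookup_zip_map (f : nat -> lam) l z : z \in l -> lookup z (zip l (map f l)) = Some (f z).
Proof.
elim: l => //= w l IH; rewrite inE; case: eqP => [->|_] /=; first by rewrite eqxx.
by case: eqP => [->|_] //; apply: IH.
Qed.

Lemma memFV z M : (z \in FV M) = (z \in fvl M).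
Proof. by rewrite /FV mem_sort mem_undup. Qed.

Lemma dec_closed t : cterm t -> fvl (dec t) = [::].
Proof.
elim=> x M ts Hsz _ IH /=.
have Hcl : closeds (zip (FV (Lam x M)) (map dec ts)).
  move=> p /In_zip2 /In_map_dec [t0 Ht ->]; exact: IH.
rewrite ssubE //.
set Q := psub _ _; case E: (fvl Q) => [|y l] //.
have : y \in fvl Q.
  by rewrite E inE eqxx.
move=> /fvl_psub [z Hz]; rewrite /sfun.
have [v Hv Hin] := @lookup_zip_in (FV (Lam x M)) (map dec ts) z
  (ltac:(by rewrite size_map Hsz)) (etrans (memFV _ _) Hz).
rewrite Hv; move: Hin => /In_map_dec [t0 Ht ->]; by rewrite IH.
Qed.

Lemma ssub_lam_value s y N : is_value (ssub s (Lam y N)).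
Proof. by rewrite /ssub /=; case: ifP. Qed.

Lemma encE (sigma : nat -> term) M : (forall y, cterm (sigma y)) ->
  dec (tsubst sigma (enc M)) = psub (fun z => dec (sigma z)) M.
Proof.
move=> Hs; elim: M => [y|y N _|M1 IH1 M2 IH2] //=; last by rewrite IH1 IH2.
have -> : map dec (map (tsubst sigma) (map Tvar (FV (Lam y N)))) =
   map (fun z => dec (sigma z)) (FV (Lam y N)) by rewrite -!map_comp.
rewrite ssubE /=; last first.
  move=> p /In_zip2 /In_map_ex [z ->]; exact: dec_closed.
congr Lam; apply: psub_ext => z Hz; rewrite /upd; case Hzy: (z == y) => //.
rewrite /sfun lookup_zip_map //.
by rewrite memFV /= mem_filter Hzy.

Qed.

Lemma cterm_nostep t u : cterm t -> tstep t u -> False.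
Proof.
move=> Ht Hs; elim: Hs Ht => {t u}.
- by move=> x M sigma _ H; inversion H.
- by move=> u u' v _ _ H; inversion H.
- by move=> u v v' _ _ H; inversion H.
- move=> x M ts1 t t' ts2 _ IH H; inversion H; subst.
  apply: IH; apply: H4; apply: List.in_or_app; right; left; reflexivity.
Qed.

Theorem lemma6 (t u : term) :
  canonical t -> tstep t u -> vstep (dec t) (dec u).
Proof.
move=> Hc Hs; elim: Hs Hc => {t u}.
- move=> x M sigma Hsig _ /=.
  set F := FV (Lam x M).
  have -> : map dec (map (tsubst sigma) (map Tvar F)) =
     map (fun z => dec (sigma z)) F by rewrite -!map_comp.
  have Hcl : closeds (zip F (map (fun z => dec (sigma z)) F)).
    move=> p /In_zip2 /In_map_ex [z ->]; exact: dec_closed.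
  rewrite ssubE //=.
  set V := dec (sigma x).
  have HV : fvl V = [::] by apply: dec_closed.
  have Hval : is_value V.
    rewrite /V; case: (Hsig x) => y N ts _ _ /=; exact: ssub_lam_value.
  set P := psub _ M.
  have -> : dec (tsubst sigma (enc M)) = subst1 P x V.
    rewrite /subst1 ssubE; last by move=> p [<-|[]].
    rewrite /P psub_comp; last first.
      by move=> z; rewrite /upd; case: eqP => [->|_]; [left|apply: sfun_cl].
    rewrite encE //; apply: psub_ext => z Hz; rewrite /upd; case: eqP => [->|/eqP Hzx].
      by rewrite /= /sfun /= eqxx.
    rewrite /sfun lookup_zip_map; last by rewrite /F memFV /= mem_filter Hzx.
    by rewrite psub_closed //=; apply: dec_closed.
  by apply: vbeta.
- move=> u u' v _ IH H /=; apply: vappl; apply: IH.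
  by inversion H; [inversion H0|].
- move=> u v v' _ IH H /=; apply: vappr; apply: IH.
  by inversion H; [inversion H0|].
- move=> x M ts1 t t' ts2 Hst _ H; exfalso.
  have Hc : cterm (Tcon x M (ts1 ++ t :: ts2)) by inversion H.
  by apply: (@cterm_nostep _ (Tcon x M (ts1 ++ t' :: ts2)) Hc); apply: tstep_con.
Qed.
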